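(* Let $G$ be a finite connected bipartite graph with bipartition $(X,Y)$ such that for each $k\le\Delta(G)$ every $k$-element subset of $X$ and every $k$-element subset of $Y$ has a common neighbour. Then $G$ is $\mathcal{C}$-$\mathrm{HH}$.
   Context: $\Delta(G)$ is the maximum degree of $G$. A common neighbour of a vertex set $S$ is a vertex adjacent to every vertex of $S$. Subgraphs are induced; a homomorphism maps edges to edges. A graph $G$ is $\mathcal{C}$-$\mathrm{HH}$ if every homomorphism from a finite connected induced subgraph of $G$ into $G$ extends to a homomorphism $G\to G$. *)

(* Defs.v *)
From mathcomp Require Import all_boot.
Set Implicit Arguments. Unset Strict Implicit. Unset Printing Implicit Defensive.

Definition simple_graph (T : finType) (e : rel T) : Prop :=
  symmetric e /\ irreflexive e.

Definition nbhd (T : finType) (e : rel T) (v : T) : {set T} := [set u | e v u].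
Definition max_degree (T : finType) (e : rel T) : nat :=
  \max_(v : T) #|nbhd e v|.

Definition induced_rel (T : finType) (e : rel T) (S : {set T}) : rel T :=
  [rel x y | [&& x \in S, y \in S & e x y]].

Definition connected_on (T : finType) (e : rel T) (S : {set T}) : Prop :=
  S != set0 /\ forall x y, x \in S -> y \in S -> connect (induced_rel e S) x y.

Definition connected_graph (T : finType) (e : rel T) : Prop :=
  connected_on e [set: T].

Definition bipartition (T : finType) (e : rel T) (X Y : {set T}) : Prop :=
  [/\ X :&: Y = set0, X :|: Y = [set: T] &
      forall x y, e x y -> (x \in X /\ y \in Y) \/ (x \in Y /\ y \in X)].

Definition common_nbr (T : finType) (e : rel T) (A : {set T}) (v : T) : Prop :=
  forall a, a \in A -> e a v.

Definition hom_on (T : finType) (e : rel T) (S : {set T}) (f : T -> T) : Prop :=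
  forall x y, x \in S -> y \in S -> e x y -> e (f x) (f y).

Definition endo_hom (T : finType) (e : rel T) (g : T -> T) : Prop :=
  forall x y, e x y -> e (g x) (g y).

Definition C_HH (T : finType) (e : rel T) : Prop :=
  forall (S : {set T}) (f : T -> T), connected_on e S -> hom_on e S f ->
    exists g : T -> T, endo_hom e g /\ (forall x, x \in S -> g x = f x).

(* Main.v *)
Require Import Defs.
From mathcomp Require Import all_boot.

Section Helpers.
Variables (T : finType) (e : rel T) (X Y : {set T}).

Lemma side_edge x y : bipartition e X Y -> e x y -> (x \in X) = ~~ (y \in X).
Proof.
case=> dis _ H /H [[hx hy]|[hx hy]].
- rewrite hx; apply/esym/negP => yX.
  have : y \in X :&: Y by rewrite inE yX hy.
  by rewrite dis inE.
- rewrite hy /=; apply/negP => xX.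
  have : x \in X :&: Y by rewrite inE xX hx.
  by rewrite dis inE.
Qed.

Definition cn (A : {set T}) (b : bool) (d : T) : T :=
  odflt d [pick w | [forall a in A, e a w] && ((w \in X) == b)].

Lemma cnP A b d : (exists w, common_nbr e A w /\ (w \in X) = b) ->
  common_nbr e A (cn A b d) /\ (cn A b d \in X) = b.
Proof.
move=> [w [Hw Hb]]; rewrite /cn; case: pickP => [z /andP [/forall_inP Hz /eqP Hzb]|/(_ w) /=].
  by split.
by rewrite Hb eqxx andbT => /negP []; apply/forall_inP.
Qed.

End Helpers.

Theorem lemma5p4 (T : finType) (e : rel T) (X Y : {set T}) :
  simple_graph e -> connected_graph e -> bipartition e X Y ->
  (forall A : {set T}, #|A| <= max_degree e ->
     (A \subset X -> exists v, common_nbr e A v) /\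
     (A \subset Y -> exists v, common_nbr e A v)) ->
  C_HH e.
Proof.
move=> [esy eirr] _ bip Hcn S f [Sne Scon] fhom.
have sideE := fun x y => @side_edge T e X Y x y bip.
have [/existsP [x0 /existsP [y0 e0]] | noedge] := boolP [exists x, exists y, e x y]; last first.
  exists f; split => // x y exy; exfalso; move/negP: noedge; apply.
  by apply/existsP; exists x; apply/existsP; exists y.
have /set0Pn [s0 s0S] := Sne.
set c := (f s0 \in X) == (s0 \in X).
have good : forall s, s \in S -> (f s \in X) = ((s \in X) == c).
  move=> s sS.
  have cl : closed (induced_rel e S) [pred s | (f s \in X) == ((s \in X) == c)].
    move=> x y /and3P [xS yS exy]; rewrite !inE.
    rewrite (sideE _ _ exy) (sideE _ _ (fhom _ _ xS yS exy)).
    by case: (f y \in X); case: (y \in X); case: c.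
  have := closed_connect cl (Scon _ _ s0S sS).
  rewrite !inE /c; case: (f s0 \in X); case: (s0 \in X) => /= /esym/eqP //.
have XY : forall z, z \notin X -> z \in Y.
  case: bip => _ U _ z zX.
  have : z \in X :|: Y by rewrite U inE.
  by rewrite inE (negbTE zX).
have ex : forall (A : {set T}) b, #|A| <= max_degree e ->
    (forall a, a \in A -> (a \in X) = ~~ b) ->
    exists w, common_nbr e A w /\ (w \in X) = b.
  move=> A b HA Hs.
  have [A0 | /set0Pn [a aA]] := eqVneq A set0.
    have s00 := sideE _ _ e0.
    clear Hs; case: b.
    - case Hx: (x0 \in X).
        by exists x0; split => // a; rewrite A0 inE.
      exists y0; split; first by move=> a; rewrite A0 inE.
      by move: s00; rewrite Hx => /esym /negbFE.
    - case Hx: (x0 \in X).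
        exists y0; split; first by move=> a; rewrite A0 inE.
        by move: s00; rewrite Hx => /esym /negbTE ->.
      by exists x0; split => // a; rewrite A0 inE.
  have [H1 H2] := Hcn A HA.
  have [w Hw] : exists w, common_nbr e A w.
    case: b Hs => Hs.
    - apply: H2; apply/subsetP => z zA.
      by apply: XY; rewrite Hs.
    - apply: H1; apply/subsetP => z zA.
      by rewrite Hs.
  exists w; split => //.
  by have := Hs a aA; rewrite (sideE _ _ (Hw _ aA)) => /(congr1 negb); rewrite !negbK.
have degle : forall t, #|f @: (nbhd e t :&: S)| <= max_degree e.
  move=> t; apply: leq_trans (leq_imset_card _ _) _.
  apply: leq_trans (subset_leq_card (subsetIl _ _)) _.
  rewrite /max_degree; exact: leq_bigmax.
pose h1 t := if t \in S then f t else if t \in X then @cn T e X (f @: (nbhd e t :&: S)) c t else t.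
pose g t := if t \in S then f t else if t \in X then h1 t else @cn T e X (h1 @: nbhd e t) (~~ c) t.
have W1 : forall t, t \notin S -> t \in X ->
    common_nbr e (f @: (nbhd e t :&: S)) (h1 t) /\ (h1 t \in X) = c.
  move=> t tS tX; rewrite /h1 (negbTE tS) tX; apply: cnP; apply: ex; first exact: degle.
  move=> a /imsetP [s]; rewrite !inE => /andP [ets sS] ->.
  by rewrite good // -[s \in X]negbK -(sideE _ _ ets) tX; have [->|->] : c = true \/ c = false by case: (c); auto.
have W2 : forall t, t \notin S -> t \notin X ->
    common_nbr e (h1 @: nbhd e t) (g t) /\ (g t \in X) = ~~ c.
  move=> t tS tX; rewrite /g (negbTE tS) (negbTE tX); apply: cnP; apply: ex.
    apply: leq_trans (leq_imset_card _ _) _.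
    rewrite /max_degree; exact: leq_bigmax.
  move=> a /imsetP [s]; rewrite !inE => ets ->.
  have sX : s \in X by rewrite -[s \in X]negbK -(sideE _ _ ets).
  case sS: (s \in S).
    by rewrite /h1 sS good // sX negbK.
  by rewrite negbK; case: (W1 s (negbT sS) sX).
have claim : forall x y, e x y -> x \in X -> e (g x) (g y).
  move=> x y exy xX.
  have yX : y \notin X by rewrite -(sideE _ _ exy).
  case xS: (x \in S); case yS: (y \in S).
  - by rewrite /g xS yS; apply: fhom.
  - have [C _] := W2 y (negbT yS) yX.
    have -> : g x = h1 x by rewrite /g /h1 xS.
    by apply: C; apply/imsetP; exists x => //; rewrite inE esy.
  - have [C _] := W1 x (negbT xS) xX.
    have -> : g x = h1 x by rewrite /g xS xX.
    have -> : g y = f y by rewrite /g yS.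
    rewrite esy; apply: C; apply/imsetP; exists y => //; by rewrite !inE exy yS.
  - have [C _] := W2 y (negbT yS) yX.
    have -> : g x = h1 x by rewrite /g xS xX.
    by apply: C; apply/imsetP; exists x => //; rewrite inE esy.
exists g; split; last by move=> x xS; rewrite /g xS.
move=> x y exy.
case xX: (x \in X); first exact: claim.
rewrite esy; apply: claim; first by rewrite esy.
by rewrite -[y \in X]negbK -(sideE _ _ exy) xX.
Qed.
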